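(* Consider a finite reward-free MDP with occupancy polytope $\Phi$, let $d_e\in\Phi$, and let $F_e$ be the minimal face of $\Phi$ containing $d_e$. For any $r\in\mathcal R(d_e)$, the optimal occupancy set $\Phi^\star(r):=\arg\max_{d\in\Phi}r^\top d$ is an exposed face of $\Phi$ containing $d_e$. Moreover, if $r\in\mathrm{relint}(\mathcal R(d_e))$, then $\Phi^\star(r)=F_e$.
   Context: The MDP has finite $S$, $A$, transitions $P$, initial distribution $\mu_0$, discount $\gamma\in(0,1)$; $(Md)(s)=\sum_a d(s,a)-\gamma\sum_{s',a'}P(s\mid s',a')d(s',a')$ and $\Phi=\{d\ge0:Md=(1-\gamma)\mu_0\}$ (a polytope). Rewards are $r\in\Delta(S\times A)$ (probability simplex). $\mathrm{subopt}(r,d):=\max_{\tilde d\in\Phi}r^\top\tilde d-r^\top d$ and $\mathcal R(d_e):=\{r\in\Delta(S\times A):\mathrm{subopt}(r,d_e)=0\}$. $\mathrm{relint}$ denotes relative interior. *)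

(* Defs.v *)
From HB Require Import structures.
From mathcomp Require Import all_boot all_order all_algebra.
From mathcomp Require Import boolp classical_sets reals.
Set Implicit Arguments. Unset Strict Implicit. Unset Printing Implicit Defensive.
Import Order.TTheory GRing.Theory Num.Theory.
Local Open Scope ring_scope.
Local Open Scope classical_set_scope.

Section MDP.
Variables (R : realType) (S A : finType).

Definition vec := (S * A)%type -> R.

Definition dotp (u v : vec) : R := \sum_(x : S * A) u x * v x.

(* (M d)(s) = sum_a d(s,a) - gamma sum_{s',a'} P(s | s',a') d(s',a');
   P s s' a' stands for P(s | s', a'). *)
Definition flowM (P : S -> S -> A -> R) (gamma : R) (d : vec) (s : S) : R :=
  \sum_(a : A) d (s, a) - gamma * \sum_(x : S * A) P s x.1 x.2 * d x.

Definition occupancy (P : S -> S -> A -> R) (mu0 : S -> R) (gamma : R) : set vec :=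
  [set d | (forall x, 0 <= d x) /\
           (forall s, flowM P gamma d s = (1 - gamma) * mu0 s)].

Definition simplex : set vec :=
  [set r | (forall x, 0 <= r x) /\ \sum_(x : S * A) r x = 1].

Definition subopt (Phi : set vec) (r d : vec) : R :=
  sup [set dotp r d' | d' in Phi] - dotp r d.

Definition rewardSet (Phi : set vec) (de : vec) : set vec :=
  [set r | simplex r /\ subopt Phi r de = 0].

Definition optSet (Phi : set vec) (r : vec) : set vec :=
  [set d | Phi d /\ forall d', Phi d' -> dotp r d' <= dotp r d].

Definition cvx (t : R) (x y : vec) : vec := fun i => t * x i + (1 - t) * y i.

Definition is_convex (C : set vec) : Prop :=
  forall x y t, C x -> C y -> 0 <= t <= 1 -> C (cvx t x y).

Definition is_face (C F : set vec) : Prop :=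
  F `<=` C /\ is_convex F /\
  forall x y t, C x -> C y -> 0 < t < 1 -> F (cvx t x y) -> F x /\ F y.

Definition is_exposed_face (C F : set vec) : Prop :=
  is_face C F /\
  exists (c : vec) (b : R),
    (forall x, C x -> dotp c x <= b) /\
    (forall x, F x <-> (C x /\ dotp c x = b)).

Definition is_min_face (C F : set vec) (x : vec) : Prop :=
  is_face C F /\ F x /\ forall G, is_face C G -> G x -> F `<=` G.

Definition aff (C : set vec) : set vec :=
  [set y | exists (n : nat) (p : 'I_n -> vec) (w : 'I_n -> R),
     (forall k, C (p k)) /\ \sum_(k < n) w k = 1 /\
     forall i, y i = \sum_(k < n) w k * p k i].

(* relative interior (w.r.t. the sup norm; all norms are equivalent) *)
Definition relint (C : set vec) : set vec :=
  [set x | C x /\ exists eps : R, 0 < eps /\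
     forall y, aff C y -> (forall i, `|y i - x i| < eps) -> C y].

End MDP.

(* Main.v *)
Require Import Defs.
From mathcomp Require Import all_boot all_order all_algebra.
From mathcomp Require Import boolp classical_sets reals.
From mathcomp Require Import ring lra.
Import Order.TTheory GRing.Theory Num.Theory.
Local Open Scope ring_scope.
Local Open Scope classical_set_scope.

Lemma sum_cvxF (R : realType) (I : finType) (F x y : I -> R) (t : R) :
  \sum_i F i * (t * x i + (1 - t) * y i) =
  t * \sum_i F i * x i + (1 - t) * \sum_i F i * y i.
Proof.
rewrite (eq_bigr (fun i => t * (F i * x i) + (1-t)*(F i * y i))); last by move=> i _; ring.
by rewrite big_split /= -!mulr_sumr.
Qed.

Lemma sum_cvx0 (R : realType) (I : finType) (x y : I -> R) (t : R) :
  \sum_i (t * x i + (1 - t) * y i) = t * \sum_i x i + (1 - t) * \sum_i y i.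
Proof.
rewrite (eq_bigr (fun i => t * x i + (1-t)* y i)) //.
by rewrite big_split /= -!mulr_sumr.
Qed.

Lemma dotp_cvx (R : realType) (S A : finType) (r x y : vec R S A) t :
  dotp r (cvx t x y) = t * dotp r x + (1 - t) * dotp r y.
Proof. exact: sum_cvxF. Qed.

Lemma dotp_cvxl (R : realType) (S A : finType) (r1 r2 d : vec R S A) t :
  dotp (cvx t r1 r2) d = t * dotp r1 d + (1 - t) * dotp r2 d.
Proof.
rewrite /dotp /cvx (eq_bigr (fun i => t * (r1 i * d i) + (1-t)*(r2 i * d i))); last by move=> i _; ring.
by rewrite big_split /= -!mulr_sumr.
Qed.

Lemma flowM_cvx (R : realType) (S A : finType) (P : S -> S -> A -> R) g
  (x y : vec R S A) t s :
  flowM P g (cvx t x y) s = t * flowM P g x s + (1 - t) * flowM P g y s.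
Proof.
rewrite /flowM /cvx sum_cvx0.
rewrite (@sum_cvxF R _ (fun i : S * A => P s i.1 i.2)); ring.
Qed.

Lemma occ_cvx (R : realType) (S A : finType) (P : S -> S -> A -> R) mu0 g
  (x y : vec R S A) t :
  (forall s, flowM P g x s = (1 - g) * mu0 s) ->
  (forall s, flowM P g y s = (1 - g) * mu0 s) ->
  (forall i, 0 <= cvx t x y i) -> occupancy P mu0 g (cvx t x y).
Proof.
move=> Hx Hy H0; split => // s; rewrite flowM_cvx Hx Hy; ring.
Qed.

Lemma sum_occ (R : realType) (S A : finType) (P : S -> S -> A -> R) mu0 g
  (HP1 : forall s' a, \sum_(s : S) P s s' a = 1)
  (Hmu1 : \sum_(s : S) mu0 s = 1) (Hg : g < 1)
  (d : vec R S A) : occupancy P mu0 g d -> \sum_x d x = 1.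
Proof.
move=> [_ Hd].
have E : \sum_s flowM P g d s = \sum_s (1 - g) * mu0 s by apply eq_bigr => s _.
rewrite -mulr_sumr Hmu1 mulr1 /flowM sumrB -mulr_sumr in E.
have E2 : \sum_s \sum_(x : S * A) P s x.1 x.2 * d x = \sum_x d x.
  by rewrite exchange_big; apply eq_bigr => x _; rewrite -mulr_suml HP1 mul1r.
have E3 : \sum_s \sum_a d (s, a) = \sum_x d x by rewrite pair_bigA; apply eq_bigr => -[].
rewrite E2 E3 in E.
set X := \sum_x d x in E *.
have : (1 - g) * (X - 1) = 0.
  have -> : (1 - g) * (X - 1) = (X - g * X) - (1 - g) by ring.
  by rewrite E subrr.
move/eqP; rewrite mulf_eq0 => /orP [|]; first by move/eqP => ?; lra.
by rewrite subr_eq0 => /eqP.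
Qed.

Arguments sum_occ {R S A P mu0 g} HP1 Hmu1 Hg {d}.

Lemma le_sum1 (R : realType) (I : finType) (f : I -> R) :
  (forall x, 0 <= f x) -> \sum_x f x = 1 -> forall i, f i <= 1.
Proof.
move=> H0 H1 i; rewrite -H1 (bigD1 i) //= lerDl; exact: sumr_ge0.
Qed.

Lemma dotp_le1 (R : realType) (S A : finType) (r d : vec R S A) :
  simplex r -> (forall x, 0 <= d x) -> (forall x, d x <= 1) -> dotp r d <= 1.
Proof.
move=> [Hr0 Hr1] Hd0 Hd1; rewrite -Hr1 /dotp; apply: ler_sum => x _.
by rewrite -[leRHS]mulr1 ler_wpM2l.
Qed.

Lemma sup_eq_max (R : realType) (E : set R) m :
  E m -> (forall x, E x -> x <= m) -> sup E = m.
Proof.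
move=> Em Hub; apply/eqP; rewrite eq_le; apply/andP; split.
  by apply: ge_sup; [exists m | ].
by apply: ub_le_sup => //; exists m.
Qed.

Lemma opt_of_reward (R : realType) (S A : finType)
  (P : S -> S -> A -> R) (mu0 : S -> R) (g : R)
  (HP1 : forall s' a, \sum_(s : S) P s s' a = 1)
  (Hmu1 : \sum_(s : S) mu0 s = 1) (Hg : g < 1) (de r : vec R S A) :
  rewardSet (occupancy P mu0 g) de r ->
  forall d, occupancy P mu0 g d -> dotp r d <= dotp r de.
Proof.
move=> [Hs Hsub] d Hd.
have -> : dotp r de = sup [set dotp r d' | d' in occupancy P mu0 g].
  by move/eqP: Hsub; rewrite /subopt subr_eq0 => /eqP ->.
apply: ub_le_sup; last by exists d.
exists 1 => _ [d' Hd' <-]; apply: dotp_le1 => //; first by case: Hd'.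
apply: le_sum1; first by case: Hd'.
exact: (sum_occ HP1 Hmu1 Hg Hd').
Qed.

Arguments opt_of_reward {R S A P mu0 g} HP1 Hmu1 Hg {de r}.

Lemma part1 (R : realType) (S A : finType)
  (P : S -> S -> A -> R) (mu0 : S -> R) (g : R)
  (HP1 : forall s' a, \sum_(s : S) P s s' a = 1)
  (Hmu1 : \sum_(s : S) mu0 s = 1) (Hg : g < 1) (de r : vec R S A) :
  occupancy P mu0 g de ->
  rewardSet (occupancy P mu0 g) de r ->
  is_exposed_face (occupancy P mu0 g) (optSet (occupancy P mu0 g) r)
  /\ optSet (occupancy P mu0 g) r de.
Proof.
move=> Hde Hr.
have Hopt := opt_of_reward HP1 Hmu1 Hg Hr.
split; last by split.
split; last first.
  exists r, (dotp r de); split => // x; split.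
    move=> [Hx Hmax]; split => //; apply/eqP; rewrite eq_le Hopt //=.
    exact: Hmax.
  by move=> [Hx Heq]; split => // d' Hd'; rewrite Heq; apply: Hopt.
split; first by move=> x [].
split.
  move=> x y t [[Hx0 Hx1] Hxm] [[Hy0 Hy1] Hym] /andP [t0 t1].
  split.
    split.
      by move=> i; rewrite /cvx addr_ge0 // mulr_ge0 // subr_ge0.
    by move=> s; rewrite flowM_cvx Hx1 Hy1; ring.
  move=> d' Hd'; rewrite dotp_cvx.
  have := Hxm d' Hd'; have := Hym d' Hd'; nra.
move=> x y t Hx Hy /andP [t0 t1] [Hc Hcm].
have Hxx := Hcm x Hx; have Hyy := Hcm y Hy.
rewrite dotp_cvx in Hcm Hxx Hyy.
split; split => // d' Hd'; have := Hcm d' Hd'; nra.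
Qed.

Arguments part1 {R S A P mu0 g} HP1 Hmu1 Hg {de r}.
Set Implicit Arguments.

Lemma exists_eps (R : realType) (I : finType) (f : I -> R) :
  exists eps : R, 0 < eps /\ forall i, 0 < f i -> eps <= f i.
Proof.
suff : forall s : seq I, exists eps : R, 0 < eps /\
    forall i, i \in s -> 0 < f i -> eps <= f i.
  by move=> /(_ (enum I)) [eps [H0 H]]; exists eps; split => // i; apply: H; rewrite mem_enum.
elim => [|a s [eps [H0 H]]]; first by exists 1; split.
case: (ltP 0 (f a)) => Ha.
  exists (Order.min eps (f a)); split; first by rewrite lt_min H0.
  move=> i; rewrite inE => /orP [/eqP -> _|Hi Hf]; first by rewrite ge_min lexx orbT.
  by rewrite ge_min H.
exists eps; split => // i; rewrite inE => /orP [/eqP -> Hf|Hi Hf]; last exact: H.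
by move: Ha; rewrite leNgt Hf.
Qed.

Definition ind (R : realType) (S A : finType) (de : vec R S A) : vec R S A :=
  fun x => if de x != 0 then 1 else 0.

Definition rstar (R : realType) (S A : finType) (de : vec R S A) : vec R S A :=
  fun x => ind de x / \sum_y ind de y.

Lemma ind_ge0 (R : realType) (S A : finType) (de : vec R S A) x : 0 <= ind de x.
Proof. by rewrite /ind; case: ifP. Qed.

Lemma ind_le1 (R : realType) (S A : finType) (de : vec R S A) x : ind de x <= 1.
Proof. by rewrite /ind; case: ifP. Qed.

Lemma ind_mul (R : realType) (S A : finType) (de : vec R S A) x : ind de x * de x = de x.
Proof. by rewrite /ind; case: ifP => [_|/negbFE/eqP ->]; rewrite ?mul1r ?mulr0. Qed.

Lemma ind_pos (R : realType) (S A : finType) (de : vec R S A) :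
  \sum_x de x = 1 -> 0 < \sum_x ind de x.
Proof.
move=> H.
have [x0 Hx0] : exists x, de x != 0.
  apply/existsP; apply: contraT; rewrite negb_exists => /forallP Hall.
  move: H; rewrite big1 => [|x _]; last by move: (Hall x); rewrite negbK => /eqP.
  by move/eqP; rewrite eq_sym oner_eq0.
rewrite (bigD1 x0) //= {1}/ind Hx0 ltr_wpDr //.
by apply: sumr_ge0 => x _; exact: ind_ge0.
Qed.

Lemma dotp_rstar (R : realType) (S A : finType) (de d : vec R S A) :
  dotp (rstar de) d = (\sum_x ind de x * d x) / \sum_y ind de y.
Proof.
rewrite /dotp /rstar mulr_suml; apply: eq_bigr => x _; rewrite /=; ring.
Qed.

Lemma sum_ind_le (R : realType) (S A : finType) (de d : vec R S A) :
  (forall x, 0 <= d x) -> \sum_x ind de x * d x <= \sum_x d x.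
Proof.
move=> H; apply: ler_sum => x _; rewrite -[leRHS]mul1r ler_wpM2r //; exact: ind_le1.
Qed.

Lemma rstar_reward (R : realType) (S A : finType)
  (P : S -> S -> A -> R) (mu0 : S -> R) (g : R)
  (HP1 : forall s' a, \sum_(s : S) P s s' a = 1)
  (Hmu1 : \sum_(s : S) mu0 s = 1) (Hg : g < 1) (de : vec R S A) :
  occupancy P mu0 g de ->
  rewardSet (occupancy P mu0 g) de (rstar de) /\
  (forall d, occupancy P mu0 g d -> dotp (rstar de) d <= dotp (rstar de) de).
Proof.
move=> Hde.
have Hs := sum_occ HP1 Hmu1 Hg Hde.
have Hk := ind_pos de Hs.
have Hmax : forall d, occupancy P mu0 g d -> dotp (rstar de) d <= dotp (rstar de) de.
  move=> d Hd; rewrite !dotp_rstar ler_pM2r ?invr_gt0 //.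
  rewrite (eq_bigr _ (fun x _ => ind_mul de x)) Hs -(sum_occ HP1 Hmu1 Hg Hd).
  by apply: sum_ind_le; case: Hd.
split => //; split.
  split; first by move=> x; rewrite /rstar divr_ge0 ?ind_ge0 // ltW.
  by rewrite /rstar -mulr_suml divff // gt_eqF.
rewrite /subopt (@sup_eq_max _ _ (dotp (rstar de) de)) ?subrr //.
  by exists de.
by move=> _ [d Hd <-]; apply: Hmax.
Qed.

Lemma rstar_supp (R : realType) (S A : finType)
  (P : S -> S -> A -> R) (mu0 : S -> R) (g : R)
  (HP1 : forall s' a, \sum_(s : S) P s s' a = 1)
  (Hmu1 : \sum_(s : S) mu0 s = 1) (Hg : g < 1) (de d : vec R S A) :
  occupancy P mu0 g de ->
  optSet (occupancy P mu0 g) (rstar de) d -> forall x, de x = 0 -> d x = 0.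
Proof.
move=> Hde [Hd Hopt] x Hx.
have Hs := sum_occ HP1 Hmu1 Hg Hde.
have Hsd := sum_occ HP1 Hmu1 Hg Hd.
have Hk := ind_pos de Hs.
have := Hopt de Hde; rewrite !dotp_rstar ler_pM2r ?invr_gt0 //.
rewrite (eq_bigr _ (fun x _ => ind_mul de x)) Hs => Hle.
have H0 : \sum_y (1 - ind de y) * d y = 0.
  apply/eqP; rewrite eq_le; apply/andP; split.
    rewrite (eq_bigr (fun y => d y - ind de y * d y)); last by move=> y _; ring.
    by rewrite sumrB Hsd subr_le0.
  apply: sumr_ge0 => y _; rewrite mulr_ge0 ?subr_ge0 ?ind_le1 //; by case: Hd.
have := psumr_eq0P (P := predT) _ H0 (i := x) isT.
rewrite /ind Hx eqxx /= subr0 mul1r; apply => y _.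
rewrite mulr_ge0 ?subr_ge0 ?ind_le1 //; by case: Hd.
Qed.

Lemma supp_face (R : realType) (S A : finType)
  (P : S -> S -> A -> R) (mu0 : S -> R) (g : R)
  (HP1 : forall s' a, \sum_(s : S) P s s' a = 1)
  (Hmu1 : \sum_(s : S) mu0 s = 1) (Hg : g < 1) (de d : vec R S A) Fe :
  occupancy P mu0 g de -> is_face (occupancy P mu0 g) Fe -> Fe de ->
  occupancy P mu0 g d -> (forall x, de x = 0 -> d x = 0) -> Fe d.
Proof.
move=> Hde [_ [_ Hext]] Fde Hd Hsupp.
have [eps [eps0 Heps]] := @exists_eps _ _ de.
have Hd1 := @le_sum1 _ _ _ Hd.1 (sum_occ HP1 Hmu1 Hg Hd).
have Hy : occupancy P mu0 g (cvx (1 + eps) de d).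
  apply: (@occ_cvx R S A P mu0 g); [exact: Hde.2 | exact: Hd.2 |] => i; rewrite /cvx.
  have := Hde.1 i; have := Hd.1 i; have := Hd1 i.
  have [Hz|Hne] := eqVneq (de i) 0; first by rewrite Hz Hsupp // !mulr0 addr0.
  move=> h1 h2 h3; have Hpos : 0 < de i by rewrite lt0r Hne.
  have := Heps i Hpos; nra.
have E : cvx (1 + eps)^-1 (cvx (1 + eps) de d) d = de.
  apply: funext => i; rewrite /cvx; field; lra.
have Ht : 0 < (1 + eps)^-1 < 1.
  rewrite invr_gt0 invf_lt1; lra.
by case: (Hext _ _ _ Hy Hd Ht); rewrite ?E.
Qed.

Unset Implicit Arguments.

Theorem mainTheorem7 (R : realType) (S A : finType)
  (P : S -> S -> A -> R) (mu0 : S -> R) (gamma : R)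
  (HP0 : forall s s' a, 0 <= P s s' a)
  (HP1 : forall s' a, \sum_(s : S) P s s' a = 1)
  (Hmu0 : forall s, 0 <= mu0 s)
  (Hmu1 : \sum_(s : S) mu0 s = 1)
  (Hgamma : 0 < gamma < 1)
  (de : vec R S A) (Hde : occupancy P mu0 gamma de)
  (Fe : set (vec R S A)) (HFe : is_min_face (occupancy P mu0 gamma) Fe de) :
  (forall r, rewardSet (occupancy P mu0 gamma) de r ->
     is_exposed_face (occupancy P mu0 gamma) (optSet (occupancy P mu0 gamma) r)
     /\ optSet (occupancy P mu0 gamma) r de) /\
  (forall r, relint (rewardSet (occupancy P mu0 gamma) de) r ->
     optSet (occupancy P mu0 gamma) r = Fe).
Proof.
have Hg1 : gamma < 1 by case/andP: Hgamma.
split; first by move=> r Hr; exact (part1 HP1 Hmu1 Hg1 Hde Hr).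
move=> r [Hr [eps0 [Heps0 Hball]]].
have [Hrs Hrsmax] := rstar_reward HP1 Hmu1 Hg1 Hde.
pose t := eps0 / 4.
have Ht0 : 0 < t by rewrite /t divr_gt0.
have Hte : t < eps0 by rewrite /t; lra.
pose r2 := cvx (1 + t) r (rstar de).
have Haff : aff (rewardSet (occupancy P mu0 gamma) de) r2.
  exists 2%N, (fun k : 'I_2 => if val k == 0%N then r else rstar de),
    (fun k : 'I_2 => if val k == 0%N then 1 + t else - t).
  split; first by move=> k; case: ifP.
  split; first by rewrite !big_ord_recl big_ord0 /=; ring.
  by move=> i; rewrite !big_ord_recl big_ord0 /= /r2 /cvx; ring.
have Hclose : forall i, `|r2 i - r i| < eps0.
  move=> i; rewrite ltr_distl /r2 /cvx.
  have h1 := Hr.1.1 i; have h2 := @le_sum1 _ _ _ Hr.1.1 Hr.1.2 i.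
  have h3 := Hrs.1.1 i; have h4 := @le_sum1 _ _ _ Hrs.1.1 Hrs.1.2 i.
  have p1 : 0 <= t * r i by rewrite mulr_ge0 // ltW.
  have p2 : t * r i <= t by rewrite -[leRHS]mulr1 ler_wpM2l // ltW.
  have p3 : 0 <= t * rstar de i by rewrite mulr_ge0 // ltW.
  have p4 : t * rstar de i <= t by rewrite -[leRHS]mulr1 ler_wpM2l // ltW.
  have -> : (1 + t) * r i + (1 - (1 + t)) * rstar de i = r i + t * r i - t * rstar de i by ring.
  apply/andP; split; lra.
have Hr2 := Hball r2 Haff Hclose.
have Hopt2 := opt_of_reward HP1 Hmu1 Hg1 Hr2.
have E : r = cvx (1 + t)^-1 r2 (rstar de).
  apply: funext => i; rewrite /r2 /cvx; field; lra.
have Hs : 0 < (1 + t)^-1 < 1 by rewrite invr_gt0 invf_lt1; lra.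
clearbody r2 t.
apply/seteqP; split => d.
  move=> [HdPhi Hdmax].
  apply: (supp_face HP1 Hmu1 Hg1 Hde HFe.1 HFe.2.1 HdPhi).
  apply: (rstar_supp HP1 Hmu1 Hg1 Hde); split => // d' Hd'.
  apply: le_trans (Hrsmax d' Hd') _.
  have := Hdmax de Hde; rewrite E !dotp_cvxl.
  have := Hopt2 d HdPhi; case/andP: Hs; set s := (1 + t)^-1.
  set a1 := dotp r2 d; set b1 := dotp r2 de; set a2 := dotp (rstar de) d; set b2 := dotp (rstar de) de.
  move=> s0 s1 h1 h2.
  have : (1 - s) * (b2 - a2) <= s * (a1 - b1) by lra.
  have : s * (a1 - b1) <= 0 by apply: mulr_ge0_le0; [exact: ltW | rewrite subr_le0].
  move=> q1 q2; have q3 : (1 - s) * (b2 - a2) <= 0 by lra.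
  rewrite leNgt; apply/negP => q4.
  have : 0 < (1 - s) * (b2 - a2) by rewrite mulr_gt0 // subr_gt0.
  lra.
move=> Fd.
have [Hface Hdeo] := part1 HP1 Hmu1 Hg1 Hde Hr.
exact: (HFe.2.2 _ Hface.1 Hdeo).
Qed.
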